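(* Let $n\ge 3$, let $a>0$ be a constant, and let $f$ be continuous on $(0,\infty)$ with $\lim_{t\to\infty}f(t)=0$. Let $y$ be a solution of \[ y''+\frac{n-1}{t}y'+\frac{a+f(t)}{t^2}y=0 \] that is bounded on some interval $(t_0,\infty)$. Then $\lim_{t\to\infty}y(t)=0$. *)

(* Defs.v *)
From Stdlib Require Export Reals.
Open Scope R_scope.

Definition is_solution_on (t1 : R) (n : nat) (a : R) (f y dy d2y : R -> R) : Prop :=
  forall t, t1 < t ->
    derivable_pt_lim y t (dy t) /\
    derivable_pt_lim dy t (d2y t) /\
    d2y t + (INR n - 1) / t * dy t + (a + f t) / (t ^ 2) * y t = 0.

(* Main.v *)
Require Import Defs.
From Stdlib Require Import Reals.
From Stdlib Require Import Lra Classical.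
Open Scope R_scope.

Lemma dmul f g x df dg : derivable_pt_lim f x df -> derivable_pt_lim g x dg ->
  derivable_pt_lim (fun t => f t * g t) x (df * g x + f x * dg).
Proof. intros; exact (derivable_pt_lim_mult f g x df dg H H0). Qed.
Lemma dplus f g x df dg : derivable_pt_lim f x df -> derivable_pt_lim g x dg ->
  derivable_pt_lim (fun t => f t + g t) x (df + dg).
Proof. intros; exact (derivable_pt_lim_plus f g x df dg H H0). Qed.
Lemma dconst c x : derivable_pt_lim (fun _ => c) x 0.
Proof. exact (derivable_pt_lim_const c x). Qed.
Lemma did x : derivable_pt_lim (fun t => t) x 1.
Proof. exact (derivable_pt_lim_id x). Qed.
Lemma dext f x l l' : derivable_pt_lim f x l -> l = l' -> derivable_pt_lim f x l'.
Proof. intros H ->; exact H. Qed.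

Lemma decay (V dV : R -> R) (T0 lam e : R) : 0 < T0 -> 0 < lam -> 0 < e ->
 (forall t, T0 < t -> derivable_pt_lim V t (dV t) /\ 0 <= V t /\ t * dV t <= - lam * V t) ->
 exists t2, forall t, t2 < t -> V t < e.
Proof.
  intros HT Hl He HV.
  assert (A : exists t2, T0 < t2 /\ V t2 < e).
  { destruct (classic (exists t2, T0 < t2 /\ V t2 < e)) as [h|h]; [exact h|].
    exfalso.
    assert (H : forall t, T0 < t -> e <= V t).
    { intros t Ht. destruct (Rlt_le_dec (V t) e) as [h1|h1]; [|exact h1].
      exfalso; apply h; exists t; split; assumption. }
    set (p := T0 + 1).
    set (q := exp (ln p + V p / (lam * e) + 1)).
    assert (Hp : 0 < p) by (unfold p; lra).
    assert (Hpq : p < q).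
    { unfold q. rewrite <- (exp_ln p) at 1 by exact Hp. apply exp_increasing.
      assert (0 <= V p / (lam * e)).
      { apply Rmult_le_pos. destruct (HV p) as [_ [h2 _]]; [unfold p; lra| exact h2].
        left; apply Rinv_0_lt_compat; nra. }
      lra. }
    destruct (MVT_cor2 (fun t => V t + lam * e * ln t) (fun t => dV t + (lam * e * / t)) p q Hpq)
      as [c [Hc1 Hc2]].
    { intros c Hc. apply dplus. apply HV; unfold p in Hc; lra.
      apply (dext _ _ (0 * ln c + lam * e * / c)).
      apply (dmul (fun _ => lam * e) ln). apply dconst. apply derivable_pt_lim_ln; lra. ring. }
    assert (Hlnq : ln q = ln p + V p / (lam * e) + 1) by (unfold q; apply ln_exp).
    assert (Hc0 : T0 < c) by (unfold p in Hc2; lra).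
    destruct (HV c Hc0) as [_ [_ Hd]].
    assert (Hec := H c Hc0).
    assert (dV c + lam * e * / c <= 0).
    { assert (c * (dV c + lam * e * / c) <= 0).
      { rewrite Rmult_plus_distr_l. replace (c * (lam * e * / c)) with (lam * e) by (field; lra).
        nra. }
      assert (0 < c) by lra.
      destruct (Rle_dec (dV c + lam * e * / c) 0); [assumption|]. nra. }
    assert (Hq : T0 < q) by (unfold p in Hpq; lra).
    assert (Vq := H q Hq).
    rewrite Hlnq in Hc1.
    assert (lam * e * (V p / (lam * e)) = V p) by (field; lra).
    nra. }
  destruct A as [t2 [Ht2 Hv2]]. exists t2. intros t Ht.
  destruct (MVT_cor2 V dV t2 t Ht) as [c [Hc1 Hc2]].
  { intros c Hc. apply HV; lra. }
  destruct (HV c ltac:(lra)) as [_ [Hc3 Hd]].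
  assert (dV c <= 0).
  { destruct (Rle_dec (dV c) 0); [assumption|]. nra. }
  nra.
Qed.

Theorem lemma3p4 (n : nat) (a t1 : R) (f y dy d2y : R -> R) :
  (3 <= n)%nat ->
  0 < a ->
  (forall t, 0 < t -> continuity_pt f t) ->
  (forall eps, 0 < eps -> exists M, forall t, M < t -> Rabs (f t) < eps) ->
  0 <= t1 ->
  is_solution_on t1 n a f y dy d2y ->
  (exists t0 B, t1 <= t0 /\ forall t, t0 < t -> Rabs (y t) <= B) ->
  forall eps, 0 < eps -> exists M, forall t, M < t -> Rabs (y t) < eps.
Proof.
  intros Hn Ha _ Hf Ht1 Hsol _ eps Heps.
  assert (Hn3 : 3 <= INR n) by (apply (le_INR 3 n) in Hn; simpl in Hn; lra).
  set (c := INR n - 2).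
  assert (Hc : 1 <= c) by (unfold c; lra).
  set (lam := a / (2 * (c + a))).
  assert (Hlid : lam * (2 * (c + a)) = a) by (unfold lam; field; lra).
  assert (Hl0 : 0 < lam) by (unfold lam; apply Rdiv_lt_0_compat; lra).
  assert (Hl12 : lam <= 1/2) by nra.
  assert (Hlc : lam * c <= a / 2) by nra.
  set (beta := a - lam * c + lam * lam).
  assert (Hb : a / 2 <= beta) by (unfold beta; nra).
  set (eta := Rmin (1/2) (lam * beta)).
  assert (Heta : 0 < eta) by (unfold eta; apply Rmin_glb_lt; nra).
  destruct (Hf eta Heta) as [Mf HMf].
  set (T0 := Rmax 1 (Rmax t1 Mf)).
  assert (HT1 : 1 <= T0) by apply Rmax_l.
  assert (HTt1 : t1 <= T0) by (eapply Rle_trans; [apply Rmax_l|apply Rmax_r]).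
  assert (HTM : Mf <= T0) by (eapply Rle_trans; [apply Rmax_r|apply Rmax_r]).
  set (z := fun t => t * dy t + lam * y t).
  set (V := fun t => z t * z t + beta * (y t * y t)).
  set (dV := fun t => 2 * z t * (dy t + t * d2y t + lam * dy t) + beta * (2 * y t * dy t)).
  destruct (decay V dV T0 lam (a * (eps * eps) / 2)) as [t2 Ht2].
  - lra.
  - exact Hl0.
  - unfold Rdiv; apply Rmult_lt_0_compat; [apply Rmult_lt_0_compat; nra | lra].
  - intros t Ht.
    destruct (Hsol t ltac:(lra)) as [Dy [Ddy Eq]].
    assert (Hft : Rabs (f t) < eta) by (apply HMf; lra).
    assert (Hf1 : Rabs (f t) <= 1/2) by (generalize (Rmin_l (1/2) (lam*beta)); fold eta; lra).
    assert (Hf2 : Rabs (f t) <= lam * beta) by (generalize (Rmin_r (1/2) (lam*beta)); fold eta; lra).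
    split; [|split].
    + apply (dext _ _ (2 * (z t * (dy t + t * d2y t + lam * dy t)) + beta * (2 * (y t * dy t)))).
      * unfold V. apply dplus.
        -- apply (dext _ _ ((dy t + t * d2y t + lam * dy t) * z t + z t * (dy t + t * d2y t + lam * dy t))); [|ring].
           assert (Dz : derivable_pt_lim z t (dy t + t * d2y t + lam * dy t)).
           { unfold z. apply (dext _ _ ((1 * dy t + t * d2y t) + (0 * y t + lam * dy t))); [|ring].
             apply dplus. apply (dmul (fun t => t) dy). apply did. exact Ddy.
             apply (dmul (fun _ => lam) y). apply dconst. exact Dy. }
           apply dmul; exact Dz.
        -- apply (dext _ _ (0 * (y t * y t) + beta * (dy t * y t + y t * dy t))); [|ring].
           apply (dmul (fun _ => beta) (fun t => y t * y t)). apply dconst.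
           apply dmul; exact Dy.
      * unfold dV. ring.
    + unfold V. assert (0 <= z t * z t) by nra. assert (0 <= y t * y t) by nra. nra.
    + assert (Ht0 : 0 < t) by lra.
      assert (HD : d2y t = (-(INR n - 1) * t * dy t - (a + f t) * y t) / (t * t)).
      { apply (Rmult_eq_reg_l (t * t)); [|nra].
        replace (t * t * ((-(INR n - 1) * t * dy t - (a + f t) * y t) / (t * t)))
          with (-(INR n - 1) * t * dy t - (a + f t) * y t) by (field; lra).
        replace (t ^ 2) with (t * t) in Eq by ring.
        assert (E2 : t * t * ((INR n - 1) / t * dy t + (a + f t) / (t * t) * y t)
                     = (INR n - 1) * t * dy t + (a + f t) * y t) by (field; lra).
        nra. }
      assert (E : t * dV t = - 2 * (c - lam) * (z t * z t) - 2 * beta * lam * (y t * y t)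
                              - 2 * f t * y t * z t).
      { unfold dV, z, beta, c. rewrite HD. field. lra. }
      rewrite E. unfold V.
      set (Z := z t) in *. set (Y := y t) in *. set (F := f t) in *.
      assert (HZ : 0 <= Z * Z) by exact (Rle_0_sqr Z). assert (HY : 0 <= Y * Y) by exact (Rle_0_sqr Y).
      assert (Hcr : - 2 * F * Y * Z <= Rabs F * (Y * Y + Z * Z)).
      { assert (0 <= (Y+Z)*(Y+Z)) by exact (Rle_0_sqr (Y+Z)). assert (0 <= (Y-Z)*(Y-Z)) by exact (Rle_0_sqr (Y-Z)).
        unfold Rabs; destruct (Rcase_abs F).
        - assert (0 <= -F * ((Y-Z)*(Y-Z))) by (apply Rmult_le_pos; lra). nra.
        - assert (0 <= F * ((Y+Z)*(Y+Z))) by (apply Rmult_le_pos; lra). nra. }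
      assert (Ha1 : Rabs F * (Z * Z) <= 1/2 * (Z * Z)) by (apply Rmult_le_compat_r; lra).
      assert (Ha2 : Rabs F * (Y * Y) <= lam * beta * (Y * Y)) by (apply Rmult_le_compat_r; lra).
      assert (Hcz : - 2 * (c - lam) * (Z * Z) <= - (Z * Z)) by nra.
      nra.
  - exists t2. intros t Ht. specialize (Ht2 t Ht). unfold V in Ht2.
    assert (0 <= z t * z t) by nra.
    assert (HY : y t * y t < eps * eps) by nra.
    unfold Rabs; destruct (Rcase_abs (y t)); nra.
Qed.
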